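(* Let $K$ be a field and let $\lambda_1,\dots,\lambda_n$ be pairwise relatively prime positive integers, $\boldsymbol{\lambda}=(\lambda_1,\dots,\lambda_n)$, and $\Lambda=\langle1/\lambda_1,\dots,1/\lambda_n\rangle$ the additive submonoid of $\mathbb{Q}_{\ge}$ they generate. Then $I(\boldsymbol{\lambda})\subseteq K[x_1,\dots,x_n]$ is normal if and only if $\Lambda$ is quasinormal.
   Context: $I(\boldsymbol{\lambda})$ is the integral closure in $K[x_1,\dots,x_n]$ of $(x_1^{\lambda_1},\dots,x_n^{\lambda_n})$; an ideal is normal if all its positive powers are integrally closed. A submonoid $S$ of $\mathbb{Q}_{\ge}$ is quasinormal if whenever $x\in S$ and $x\ge p$ for a positive integer $p$, there exist $y_1,\dots,y_p\in S$ with $y_i\ge 1$ for all $i$ and $x=y_1+\cdots+y_p$. *)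

(* Defs.v *)
From HB Require Import structures.
From mathcomp Require Import all_boot all_order all_algebra.
From mathcomp Require Import mpoly.
Set Implicit Arguments. Unset Strict Implicit. Unset Printing Implicit Defensive.
Import Order.TTheory GRing.Theory Num.Theory.
Local Open Scope ring_scope.

Section Ideals.
Variable R : comRingType.

Definition ideal_span (S : R -> Prop) : R -> Prop :=
  fun f => exists (s : seq R) (c : seq R),
    (forall g, g \in s -> S g) /\ size c = size s /\
    f = \sum_(i < size s) c`_i * s`_i.

Definition ideal_mul (I J : R -> Prop) : R -> Prop :=
  ideal_span (fun x => exists a b, I a /\ J b /\ x = a * b).

Fixpoint ideal_pow (I : R -> Prop) (k : nat) : R -> Prop :=
  match k with
  | 0%N => fun _ => True
  | k'.+1 => ideal_mul (ideal_pow I k') I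
  end.

Definition integral_over_ideal (I : R -> Prop) (f : R) : Prop :=
  exists (m : nat) (a : nat -> R), (0 < m)%N /\
    (forall i, (1 <= i <= m)%N -> ideal_pow I i (a i)) /\
    f ^+ m + \sum_(1 <= i < m.+1) a i * f ^+ (m - i) = 0.

Definition integral_closure (I : R -> Prop) : R -> Prop :=
  integral_over_ideal I.

Definition integrally_closed (I : R -> Prop) : Prop :=
  forall f, integral_over_ideal I f -> I f.

Definition normal_ideal (I : R -> Prop) : Prop :=
  forall k, (0 < k)%N -> integrally_closed (ideal_pow I k).
End Ideals.

Definition I_lambda (K : fieldType) (n : nat) (lam : 'I_n -> nat)
  : {mpoly K[n]} -> Prop :=
  integral_closure
    (ideal_span (fun f : {mpoly K[n]} => exists i : 'I_n, f = 'X_i ^+ lam i)).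

Definition Lambda (n : nat) (lam : 'I_n -> nat) : rat -> Prop :=
  fun x => exists c : 'I_n -> nat, x = \sum_(i < n) (c i)%:R / (lam i)%:R.

Definition quasinormal (S : rat -> Prop) : Prop :=
  forall (x : rat) (p : nat), S x -> (0 < p)%N -> p%:R <= x ->
    exists y : 'I_p -> rat, (forall i, S (y i) /\ 1 <= y i) /\
      x = \sum_(i < p) y i.

(* Main.v *)
Require Import Defs.
From HB Require Import structures.
From mathcomp Require Import all_boot all_order all_algebra.
From mathcomp Require Import mpoly ring zify.
Import Order.TTheory GRing.Theory Num.Theory.
Local Open Scope ring_scope.
Set Implicit Arguments. Unset Strict Implicit.

Section IdealGen.
Context (R : comRingType).
Implicit Types (S Q : R -> Prop).

Lemma span_gen S g : S g -> ideal_span S g.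
Proof.
move=> Sg; exists [:: g], [:: 1]; split; last split => //.
  by move=> x; rewrite inE => /eqP ->.
by rewrite big_ord1 /= mul1r.
Qed.

Lemma span0 S : ideal_span S 0.
Proof. by exists [::], [::]; split => //; rewrite big_ord0. Qed.

Lemma spanD S f g : ideal_span S f -> ideal_span S g -> ideal_span S (f + g).
Proof.
move=> [s1 [c1 [H1 [E1 ->]]]] [s2 [c2 [H2 [E2 ->]]]].
exists (s1 ++ s2), (c1 ++ c2); split.
  by move=> x; rewrite mem_cat => /orP [] ?; [apply: H1|apply: H2].
split; first by rewrite !size_cat E1 E2.
rewrite size_cat big_split_ord /=; congr (_ + _); apply: eq_bigr => i _.
  by rewrite /= !nth_cat E1 ltn_ord.
by rewrite /= !nth_cat E1 ltnNge leq_addr /= addKn.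
Qed.

Lemma spanM S r f : ideal_span S f -> ideal_span S (r * f).
Proof.
move=> [s [c [H [E ->]]]]; exists s, (map (fun x => r * x) c); split => //.
split; first by rewrite size_map.
rewrite mulr_sumr; apply: eq_bigr => i _.
by rewrite (nth_map 0) ?E ?ltn_ord // mulrA.
Qed.

Lemma pow0 Q k : ideal_pow Q k 0.
Proof. by case: k => [|k] //=; apply: span0. Qed.

Lemma powD Q k f g : ideal_pow Q k f -> ideal_pow Q k g -> ideal_pow Q k (f + g).
Proof. by case: k => [|k] //=; apply: spanD. Qed.

Lemma powM Q k r f : ideal_pow Q k f -> ideal_pow Q k (r * f).
Proof. by case: k => [|k] //=; apply: spanM. Qed.

Lemma pow_sum Q k (I : eqType) (s : seq I) (F : I -> R) :
  (forall i, i \in s -> ideal_pow Q k (F i)) ->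
  ideal_pow Q k (\sum_(i <- s) F i).
Proof.
elim: s => [|a s IH] H; first by rewrite big_nil; apply: pow0.
rewrite big_cons; apply: powD; first by apply: H; rewrite inE eqxx.
by apply: IH => i Hi; apply: H; rewrite inE Hi orbT.
Qed.

Lemma pow_prod Q (xs : seq R) y :
  (forall x, x \in xs -> Q x) -> ideal_pow Q (size xs) (y * \prod_(x <- xs) x).
Proof.
move: y; elim: xs => [|a xs IH] y H; first by [].
apply: span_gen; exists (y * \prod_(x <- xs) x), a; split.
  by apply: IH => x Hx; apply: H; rewrite inE Hx orbT.
split; first by apply: H; rewrite inE eqxx.
by rewrite big_cons mulrCA mulrC.
Qed.

Lemma pow_prod_nested Q (p r : nat) (xs : seq R) y :
  (forall x, x \in xs -> Q x) -> size xs = (p * r)%N ->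
  ideal_pow (ideal_pow Q p) r (y * \prod_(x <- xs) x).
Proof.
move: xs y; elim: r => [|r IH] xs y H Hs; first by [].
apply: span_gen.
exists (y * \prod_(x <- drop p xs) x), (\prod_(x <- take p xs) x); split.
  apply: IH; last by rewrite size_drop Hs mulnS addKn.
  by move=> x Hx; apply: H; apply: mem_drop Hx.
split.
  have Hsz : size (take p xs) = p.
    rewrite size_take Hs mulnS; case: ltnP => // H1; apply/eqP.
    by rewrite eqn_leq H1 leq_addr.
  have := @pow_prod Q (take p xs) 1 (fun x Hx => H x (mem_take Hx)).
  by rewrite Hsz mul1r.
by rewrite -{1}(cat_take_drop p xs) big_cat /= mulrAC mulrA.
Qed.

Lemma integral_pow Q f N : (0 < N)%N -> ideal_pow Q N (- f ^+ N) ->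
  integral_over_ideal Q f.
Proof.
move=> N0 HN; exists N, (fun i => if i == N then - f ^+ N else 0); split => //.
split; first by move=> i _; case: eqP => [->|_] //; apply: pow0.
rewrite big_nat_recr //= eqxx subnn expr0 mulr1 big1_seq ?add0r ?subrr //.
move=> i /andP [_]; rewrite mem_index_iota => /andP [_ Hi].
by rewrite (ltn_eqF Hi) mul0r.
Qed.

End IdealGen.

Section Mono.
Context (K : fieldType) (n : nat).
Local Notation R := {mpoly K[n]}.
Local Notation mon := ('X_{1..n}).

Definition MI (P : mon -> Prop) (f : R) := forall m, m \in msupp f -> P m.
Definition upc (P : mon -> Prop) := forall m e, P m -> P (m + e)%MM.
Definition sumP (P Q : mon -> Prop) m :=
  exists m1 m2, P m1 /\ Q m2 /\ m = (m1 + m2)%MM.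

Lemma MI0 P : MI P 0.
Proof. by move=> m; rewrite mcoeff_msupp mcoeff0 eqxx. Qed.

Lemma MID P f g : MI P f -> MI P g -> MI P (f + g).
Proof.
move=> Hf Hg m /msuppD_le; rewrite mem_cat => /orP [] H.
  exact: Hf. exact: Hg.
Qed.

Lemma MIM P r f : upc P -> MI P f -> MI P (r * f).
Proof.
move=> uP Hf m /msuppM_le /allpairsP [[x y] /= [Hx Hy ->]].
by rewrite addmC; apply: uP; apply: Hf.
Qed.

Lemma MI_span P S : upc P -> (forall g, S g -> MI P g) ->
  forall f, ideal_span S f -> MI P f.
Proof.
move=> uP HS f [s [c [Hs [_ ->]]]].
apply: (big_ind (MI P)); [exact: MI0 | exact: MID|] => i _.
by apply: MIM => //; apply: HS; apply: Hs; apply: mem_nth.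
Qed.

Lemma MImul P Q f g : MI P f -> MI Q g -> MI (sumP P Q) (f * g).
Proof.
move=> Hf Hg m /msuppM_le /allpairsP [[x y] /= [Hx Hy ->]].
by exists x, y; split; [apply: Hf | split; [apply: Hg|]].
Qed.

Lemma MI_mono (P Q : mon -> Prop) f : (forall m, P m -> Q m) -> MI P f -> MI Q f.
Proof. by move=> H Hf m Hm; apply: H; apply: Hf. Qed.

Fixpoint Spow (A : mon -> Prop) k : mon -> Prop :=
  match k with 0%N => fun _ => True | k'.+1 => sumP (Spow A k') A end.

Lemma upc_Spow A k : upc A -> upc (Spow A k).
Proof.
move=> uA; case: k => [|k] //= m e [m1 [m2 [H1 [H2 ->]]]].
by exists m1, (m2 + e)%MM; split => //; split; [apply: uA | rewrite addmA].
Qed.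

Lemma MI_pow Q A : upc A -> (forall g, Q g -> MI A g) ->
  forall k f, ideal_pow Q k f -> MI (Spow A k) f.
Proof.
move=> uA HQ; elim=> [|k IH] f /=; first by move=> _ m _.
apply: MI_span; first exact: (@upc_Spow A k.+1 uA).
move=> g [a [b [Ha [Hb ->]]]]; apply: MImul; [exact: IH | exact: HQ].
Qed.

Lemma MI_X P m : MI P 'X_[m] <-> P m.
Proof.
rewrite /MI msuppX; split; first by apply; rewrite inE.
by move=> H m'; rewrite inE => /eqP ->.
Qed.

Variable lam : 'I_n -> nat.
Definition Dw i := (\prod_(j < n | j != i) lam j)%N.
Definition Lw := (\prod_(i < n) lam i)%N.
Definition dw (m : mon) := (\sum_(i < n) m i * Dw i)%N.
Definition Pk k (m : mon) := (k * Lw <= dw m)%N.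
Definition wt (m : mon) : rat := \sum_(i < n) (m i)%:R / (lam i)%:R.

Lemma Lw_split i : Lw = (lam i * Dw i)%N.
Proof. by rewrite /Lw (bigD1 i) //. Qed.

Lemma dwD m1 m2 : dw (m1 + m2)%MM = (dw m1 + dw m2)%N.
Proof. by rewrite /dw -big_split; apply: eq_bigr => i _; rewrite mnmDE mulnDl. Qed.

Lemma upc_Pk k : upc (Pk k).
Proof. by move=> m e; rewrite /Pk dwD => H; apply: leq_trans H (leq_addr _ _). Qed.

Lemma Spow_Pk a k m : Spow (Pk a) k m -> Pk (k * a) m.
Proof.
elim: k m => [|k IH] m /=; first by rewrite /Pk.
move=> [m1 [m2 [H1 [H2 ->]]]]; rewrite /Pk dwD mulSn mulnDl addnC.
by apply: leq_add; [apply: IH | move: H2; rewrite /Pk].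
Qed.

Hypothesis lam_gt0 : forall i, (0 < lam i)%N.

Lemma Dw_gt0 i : (0 < Dw i)%N.
Proof. by rewrite /Dw prodn_gt0. Qed.

Lemma Lw_gt0 : (0 < Lw)%N.
Proof. by rewrite /Lw prodn_gt0. Qed.

Lemma wt_dw m : wt m = (dw m)%:R / Lw%:R.
Proof.
rewrite /wt /dw natr_sum mulr_suml; apply: eq_bigr => i _.
rewrite (Lw_split i) !natrM.
have h1 : (lam i)%:R != 0 :> rat by rewrite pnatr_eq0 -lt0n.
have h2 : (Dw i)%:R != 0 :> rat by rewrite pnatr_eq0 -lt0n Dw_gt0.
by field; rewrite h1 h2.
Qed.

Lemma wt_ge k m : (k%:R <= wt m) = Pk k m.
Proof.
rewrite wt_dw /Pk ler_pdivlMr ?ltr0n ?Lw_gt0 // -natrM ler_nat.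
by [].
Qed.

End Mono.

Section Low.
Context (T : idomainType).
Definition lowz (P : {poly T}) a := forall j, (j < a)%N -> P`_j = 0.

Lemma lowzM P Q a b : lowz P a -> lowz Q b ->
  lowz (P * Q) (a + b) /\ (P * Q)`_(a + b) = P`_a * Q`_b.
Proof.
move=> HP HQ; split.
  move=> i Hi; rewrite coefM big1 // => j _.
  case: (ltnP j a) => Hj; first by rewrite HP // mul0r.
  by rewrite HQ ?mulr0 //; have := ltn_ord j; lia.
rewrite coefM (bigD1 (Ordinal (leq_addr b a : (a < (a + b).+1)%N))) //=.
rewrite addKn big1 ?addr0 // => j /eqP Hj.
case: (ltnP j a) => H; first by rewrite HP // mul0r.
have H' : (a < j)%N by rewrite ltn_neqAle H andbT; apply/eqP => E; apply: Hj; apply: val_inj.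
by rewrite HQ ?mulr0 //; have := ltn_ord j; lia.
Qed.

Lemma lowzX P a m : lowz P a -> lowz (P ^+ m) (m * a) /\ (P ^+ m)`_(m * a) = P`_a ^+ m.
Proof.
move=> HP; elim: m => [|m [IH1 IH2]].
  by split; [move=> j; rewrite mul0n | rewrite expr0 mul0n coef1].
rewrite exprS mulSn; have [H1 H2] := lowzM HP IH1; split => //.
by rewrite H2 IH2 exprS.
Qed.

Lemma lowz_le P a b : lowz P a -> (b <= a)%N -> lowz P b.
Proof. by move=> H hb j hj; apply: H; apply: leq_trans hj hb. Qed.

Lemma lowz_sum a (I : Type) (s : seq I) (F : I -> {poly T}) :
  (forall i, lowz (F i) a) -> lowz (\sum_(i <- s) F i) a.
Proof.
move=> H j hj; rewrite coef_sum big1 // => i _; exact: H.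
Qed.
End Low.

Section Phi.
Context (K : fieldType) (n : nat) (lam : 'I_n -> nat).
Hypothesis lam_gt0 : forall i, (0 < lam i)%N.
Local Notation R := {mpoly K[n]}.
Local Notation S := {poly {mpoly K[n]}}.

Definition hphi (i : 'I_n) : S := ('X_i)%:P * 'X^(Dw lam i).
Definition phi (f : R) : S := mmap (polyC \o @mpolyC n K) hphi f.

Lemma phiM f g : phi (f * g) = phi f * phi g.
Proof. exact: rmorphM. Qed.
Lemma phiD f g : phi (f + g) = phi f + phi g.
Proof. exact: rmorphD. Qed.
Lemma phi0 : phi 0 = 0.
Proof. exact: rmorph0. Qed.
Lemma phiX f k : phi (f ^+ k) = phi f ^+ k.
Proof. exact: rmorphXn. Qed.
Lemma phi_sum (I : Type) (r : seq I) (P : pred I) (F : I -> R) :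
  phi (\sum_(i <- r | P i) F i) = \sum_(i <- r | P i) phi (F i).
Proof. exact: rmorph_sum. Qed.

Lemma mmap1_phi (m : 'X_{1..n}) : mmap1 hphi m = ('X_[m])%:P * 'X^(dw lam m).
Proof.
rewrite /mmap1 /hphi.
under eq_bigr => i _ do rewrite exprMn -rmorphXn -exprM.
rewrite big_split /= -rmorph_prod -mpolyXE_id prodrXr; congr (_ * 'X^_).
by apply: eq_bigr => i _; rewrite mulnC.
Qed.

Lemma phi_coef f j :
  (phi f)`_j = \sum_(m <- msupp f) (f@_m *: 'X_[m]) * (j == dw lam m)%:R.
Proof.
rewrite /phi /mmap coef_sum; apply: eq_bigr => m _.
by rewrite mmap1_phi /= mulrA -rmorphM coefCM coefXn mul_mpolyC.
Qed.

Lemma phi_coef_m f m0 : ((phi f)`_(dw lam m0))@_m0 = f@_m0.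
Proof.
rewrite phi_coef [in RHS](mpolyE f) !raddf_sum; apply: eq_bigr => m _ /=.
case: (eqVneq m m0) => [->|ne]; first by rewrite eqxx mulr1.
rewrite mcoeffZ mcoeffX (negbTE ne) mulr0.
by case: (dw lam m0 == dw lam m); rewrite ?mulr1 ?mulr0 ?mcoeff0 // mcoeffZ mcoeffX (negbTE ne) mulr0.
Qed.

Lemma phi_low k (f : R) : MI (Pk lam k) f -> lowz (phi f) (k * Lw lam).
Proof.
move=> H j hj; rewrite phi_coef big1_seq // => m /andP [_ hm].
have := H m hm; rewrite /Pk => h.
suff -> : (j == dw lam m) = false by rewrite mulr0.
apply/negbTE; rewrite neq_ltn; apply/orP; left; exact: leq_trans hj h.
Qed.

Lemma H1 k (Q : R -> Prop) (f : R) : (0 < k)%N -> (forall g, Q g -> MI (Pk lam k) g) ->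
  integral_over_ideal Q f -> MI (Pk lam k) f.
Proof.
move=> k0 HQ [M [a [M0 [Ha Heq]]]].
have Hai : forall i, (1 <= i <= M)%N -> lowz (phi (a i)) (i * k * Lw lam).
  move=> i hi; apply: phi_low.
  have := MI_pow (@upc_Pk n lam k) HQ (Ha i hi).
  by apply: MI_mono => m; apply: Spow_Pk.
case: (boolP (all (fun m => k * Lw lam <= dw lam m)%N (msupp f))) => [/allP Hall|].
  by move=> m hm; apply: Hall.
case/allPn => m0 hm0; rewrite -ltnNge => hlt.
have ex : exists j, (phi f)`_j != 0.
  exists (dw lam m0); apply/eqP => E.
  by move: hm0; rewrite mcoeff_msupp -(phi_coef_m f m0) E mcoeff0 eqxx.
case: (ex_minnP ex) => v hv hmin.
have hvlt : (v < k * Lw lam)%N.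
  apply: leq_ltn_trans hlt; apply: hmin; apply/eqP => E.
  by move: hm0; rewrite mcoeff_msupp -(phi_coef_m f m0) E mcoeff0 eqxx.
have lowF : lowz (phi f) v.
  move=> j hj; apply/eqP; apply: contraTT hj => hj; rewrite -leqNgt; exact: hmin.
have := congr1 (fun P : S => P`_(M * v)) (congr1 phi Heq).
rewrite /= phi0 coef0 phiD phiX phi_sum coefD coef_sum.
rewrite (lowzX M lowF).2 big1_seq ?addr0.
  by move/eqP; rewrite expf_eq0 (negbTE hv) andbF.
move=> i /andP [_]; rewrite mem_index_iota => hi.
rewrite phiM phiX.
have hi' : (1 <= i <= M)%N by exact: hi.
have [L1 _] := lowzM (Hai i hi') (lowzX (M - i) lowF).1.
apply: L1.
have hkv : (i * v < i * (k * Lw lam))%N by rewrite ltn_pmul2l //; case/andP: hi'.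
move: hkv; rewrite mulnA; have: (i <= M)%N by case/andP: hi'.
move=> hiM hkv.
have -> : (M * v = i * v + (M - i) * v)%N by rewrite -mulnDl subnKC.
by rewrite ltn_add2r.
Qed.

End Phi.

Lemma mod_cancel a x y p : coprime a p -> (x * a = y * a %[mod p])%N -> (x = y %[mod p])%N.
Proof.
wlog le : x y / (x <= y)%N.
  move=> W cop E; case: (leqP x y) => h; first exact: W.
  by apply/esym; apply: W; [exact: ltnW h | exact: cop | exact/esym].
move=> cop E; apply/esym/eqP; rewrite eqn_mod_dvd //.
have : (y * a == x * a %[mod p])%N by rewrite E.
rewrite eqn_mod_dvd ?leq_mul2r ?le ?orbT // -mulnBl Gauss_dvdl //.
by rewrite coprime_sym.
Qed.

Lemma sum_eq_le n (a b : 'I_n -> nat) : (forall i, a i <= b i)%N ->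
  (\sum_(i < n) a i = \sum_(i < n) b i)%N -> forall i, a i = b i.
Proof.
move=> H E i; apply/eqP; rewrite eqn_leq H /=; rewrite leqNgt; apply/negP => lt.
move: E; rewrite (bigD1 i) //= [in RHS](bigD1 i) //=.
have hs : (\sum_(j < n | j != i) a j <= \sum_(j < n | j != i) b j)%N.
  by apply: leq_sum => j _.
apply/eqP; rewrite neq_ltn; apply/orP; left; rewrite -addSn.
exact: leq_add lt hs.
Qed.

Section Main.
Context (K : fieldType) (n : nat) (lam : 'I_n -> nat).
Hypothesis lam_gt0 : forall i, (0 < lam i)%N.
Hypothesis lam_cop : forall i j, i != j -> coprime (lam i) (lam j).
Local Notation R := {mpoly K[n]}.
Local Notation mon := ('X_{1..n}).

Lemma Dw_cop i : coprime (Dw lam i) (lam i).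
Proof.
rewrite /Dw; apply: (big_ind (fun x => coprime x (lam i))); first exact: coprime1n.
  by move=> x y hx hy; rewrite coprimeMl hx hy.
by move=> j hj; apply: lam_cop.
Qed.

Lemma lam_dvd_Dw i j : i != j -> (lam i %| Dw lam j)%N.
Proof.
move=> ne; rewrite /Dw (bigD1 i) //=; first by apply: dvdn_mulr.
Qed.

Lemma key_eq (C m : 'I_n -> nat) : (forall i, m i < lam i)%N ->
  (\sum_(i < n) C i * Dw lam i = \sum_(i < n) m i * Dw lam i)%N ->
  forall i, C i = m i.
Proof.
move=> hm E.
have Hmod F i : (\sum_(j < n) F j * Dw lam j = F i * Dw lam i %[mod lam i])%N.
  rewrite (bigD1 i) //= -modnDmr.
  have /eqP -> : ((\sum_(j < n | j != i) F j * Dw lam j) %% lam i == 0)%N.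
    rewrite -/(dvdn _ _); apply: dvdn_sum => j hj; apply: dvdn_mull.
    by apply: lam_dvd_Dw; rewrite eq_sym.
  by rewrite addn0.
have Hc i : (C i = m i %[mod lam i])%N.
  apply: (@mod_cancel (Dw lam i)); first exact: Dw_cop.
  by rewrite -(Hmod C) E Hmod.
have Hle i : (m i <= C i)%N.
  by rewrite -(modn_small (hm i)) -Hc leq_mod.
have Hs := sum_eq_le (a := fun i => m i * Dw lam i) (b := fun i => C i * Dw lam i).
move=> i; apply/eqP; rewrite -(eqn_pmul2r (Dw_gt0 lam_gt0 i)); apply/eqP.
have Hab : forall j, (m j * Dw lam j <= C j * Dw lam j)%N by move=> j; rewrite leq_mul2r Hle orbT.
exact: (esym (Hs Hab (esym E) i)).
Qed.

Definition Gset (g : R) := exists i : 'I_n, g = 'X_i ^+ lam i.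
Local Notation J := (ideal_span Gset).
Local Notation Ilam := (@I_lambda K n lam).

Lemma XU i k : 'X_i ^+ k = 'X_[U_(i) *+ k] :> R.
Proof. by rewrite mpolyXn. Qed.

Lemma decomp N : forall v : mon, (N <= \sum_(i < n) v i %/ lam i)%N ->
  exists y xs, size xs = N /\ (forall x, x \in xs -> Gset x) /\
    'X_[v] = y * \prod_(x <- xs) x.
Proof.
elim: N => [|N IH] v hv.
  by exists 'X_[v], [::]; split => //; split => //; rewrite big_nil mulr1.
have [i hi] : exists i, (lam i <= v i)%N.
  case: (pickP (fun i => lam i <= v i)%N) => [i hi|H]; first by exists i.
  exfalso; move: hv; rewrite big1 // => i _; rewrite divn_small //.
  by rewrite ltnNge H.
pose v' := (v - U_(i) *+ lam i)%MM.
have Ev : v = (v' + U_(i) *+ lam i)%MM.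
  apply/mnmP => j; rewrite mnmDE mnmBE mulmnE mnm1E.
  case: (eqVneq i j) => [<-|ne] /=; first by rewrite mul1n subnK.
  by rewrite mul0n subn0 addn0.
have hv' : (N <= \sum_(i < n) v' i %/ lam i)%N.
  move: hv; rewrite Ev (bigD1 i) //=; rewrite [in X in _ -> X](bigD1 i) //=.
  rewrite mnmDE mulmnE mnm1E eqxx mul1n divnDr // divnn lam_gt0.
  rewrite (eq_bigr (fun j => (v' j %/ lam j)%N)).
    by rewrite addnAC addn1 ltnS.
  move=> j ne; rewrite mnmDE mulmnE mnm1E eq_sym (negbTE ne) mul0n addn0 //.
have [y [xs [h1 [h2 h3]]]] := IH v' hv'.
exists y, ('X_i ^+ lam i :: xs); split; first by rewrite /= h1.
split.
  move=> x; rewrite inE => /orP [/eqP ->|hx]; first by exists i.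
  exact: h2.
by rewrite big_cons Ev mpolyXD h3 XU mulrCA mulrC.
Qed.

Lemma m_L (m : mon) : (\sum_(i < n) (m *+ Lw lam)%MM i %/ lam i = dw lam m)%N.
Proof.
apply: eq_bigr => i _; rewrite mulmnE (Lw_split lam i) mulnCA mulKn //.
Qed.

Lemma intX (Q : R -> Prop) p m : Pk lam p m ->
  (forall y xs, size xs = (p * Lw lam)%N -> (forall x, x \in xs -> Gset x) ->
     ideal_pow Q (Lw lam) (y * \prod_(x <- xs) x)) ->
  integral_over_ideal Q 'X_[m].
Proof.
move=> hp H; apply: (integral_pow (N := Lw lam)); first exact: Lw_gt0.
have hd : (p * Lw lam <= \sum_(i < n) (m *+ Lw lam)%MM i %/ lam i)%N.
  by rewrite m_L.
have [y [xs [h1 [h2 h3]]]] := decomp hd.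
by rewrite mpolyXn h3 -mulNr; apply: H.
Qed.

Lemma G_I g : Gset g -> Ilam g.
Proof.
move=> hg; apply: (integral_pow (N := 1%N)) => //=.
apply: span_gen; exists (-1), g; split => //; split.
  exact: span_gen.
by rewrite expr1 mulN1r.
Qed.

Lemma X_I m : Pk lam 1 m -> Ilam 'X_[m].
Proof.
move=> hm; apply: (intX hm) => y xs hs hG.
rewrite mul1n in hs; rewrite -hs; apply: pow_prod => x hx.
exact: span_gen (hG x hx).
Qed.

Lemma dwU i : dw lam (U_(i) *+ lam i)%MM = Lw lam.
Proof.
rewrite /dw (bigD1 i) //= big1 => [|j ne].
  by rewrite mulmnE mnm1E eqxx mul1n addn0 (Lw_split lam i).
by rewrite mulmnE mnm1E eq_sym (negbTE ne).
Qed.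

Lemma G_MI g : Gset g -> MI (Pk lam 1) g.
Proof.
move=> [i ->]; rewrite XU; apply/MI_X; by rewrite /Pk dwU mul1n.
Qed.

Lemma I_MI g : Ilam g -> MI (Pk lam 1) g.
Proof.
apply: (@H1 K n lam 1%N J) => //.
by apply: MI_span; [exact: (@upc_Pk n lam 1%N) | exact: G_MI].
Qed.

Lemma Spow_X k m : Spow (Pk lam 1) k m -> ideal_pow Ilam k 'X_[m].
Proof.
elim: k m => [|k IH] m //= [m1 [m2 [h1 [h2 ->]]]].
apply: span_gen; exists 'X_[m1], 'X_[m2]; split; first exact: IH.
by split; [exact: X_I | rewrite mpolyXD].
Qed.

Lemma splitU (v : mon) i : (lam i <= v i)%N ->
  v = ((v - U_(i) *+ lam i) + U_(i) *+ lam i)%MM.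
Proof.
move=> hi; apply/mnmP => j; rewrite mnmDE mnmBE mulmnE mnm1E.
case: (eqVneq i j) => [<-|ne] /=; first by rewrite mul1n subnK.
by rewrite mul0n subn0 addn0.
Qed.

Lemma Pk1_wt m : Pk lam 1 m -> 1 <= wt lam m.
Proof. by move=> h; rewrite -(wt_ge lam_gt0) in h; exact: h. Qed.

Lemma wt_Pk1 m : 1 <= wt lam m -> Pk lam 1 m.
Proof. by move=> h; rewrite -(wt_ge lam_gt0); exact: h. Qed.

Lemma wtD m1 m2 : wt lam (m1 + m2)%MM = wt lam m1 + wt lam m2.
Proof. by rewrite !(wt_dw lam_gt0) dwD natrD mulrDl. Qed.

Lemma Spow_parts p (cc : nat -> 'I_n -> nat) :
  (forall j, (j < p)%N -> Pk lam 1 [multinom cc j i | i < n]) ->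
  Spow (Pk lam 1) p [multinom (\sum_(j < p) cc j i)%N | i < n].
Proof.
elim: p => [|p IH] H //=.
exists [multinom (\sum_(j < p) cc j i)%N | i < n], [multinom cc p i | i < n].
split; first by apply: IH => j hj; apply: H; apply: ltnW.
split; first by apply: H.
by apply/mnmP => i; rewrite mnmDE !mnmE big_ord_recr.
Qed.

Lemma comb : quasinormal (Lambda lam) ->
  forall k m, Pk lam k m -> Spow (Pk lam 1) k m.
Proof.
move=> qn; elim=> [|k IH] m hm //=.
case: (pickP (fun i => lam i <= m i)%N) => [i hi|H].
  exists (m - U_(i) *+ lam i)%MM, (U_(i) *+ lam i)%MM.
  split; last by split; [rewrite /Pk dwU mul1n | exact: splitU].
  apply: IH; move: hm; rewrite {1}(splitU hi) /Pk dwD dwU mulSnr.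
  by rewrite leq_add2r.
have hlt i : (m i < lam i)%N by rewrite ltnNge H.
have hx : Lambda lam (wt lam m) by exists (fun i => m i).
have hp : (k.+1)%:R <= wt lam m by rewrite (wt_ge lam_gt0).
have [y [Hy Hs]] := qn _ _ hx (ltn0Sn k) hp.
have [c Hc] := fin_all_exists (fun j => (Hy j).1).
pose cc j i := c (inord j) i.
pose mj (j : nat) := [multinom cc j i | i < n].
have wt_mj (j : 'I_k.+1) : wt lam (mj j) = y j.
  by rewrite /wt Hc /mj /cc inord_val; apply: eq_bigr => i _; rewrite mnmE.
have Hd : dw lam m = (\sum_(j < k.+1) dw lam (mj j))%N.
  have : (dw lam m)%:R / (Lw lam)%:R = (\sum_(j < k.+1) dw lam (mj j))%N%:R / (Lw lam)%:R :> rat.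
    rewrite -(wt_dw lam_gt0) Hs natr_sum mulr_suml; apply: eq_bigr => j _.
    by rewrite -(wt_dw lam_gt0) wt_mj.
  have L0 : (Lw lam)%:R != 0 :> rat by rewrite pnatr_eq0 -lt0n (Lw_gt0 lam_gt0).
  by move/(mulIf (invr_neq0 L0))/eqP; rewrite eqr_nat => /eqP.
have Hsum : forall i, (\sum_(j < k.+1) cc j i)%N = m i.
  apply: (@key_eq (fun i => \sum_(j < k.+1) cc j i)%N (fun i => m i) hlt).
  rewrite -/(dw lam m) Hd /dw exchange_big /=; apply: eq_bigr => i _.
  by rewrite big_distrl /=; apply: eq_bigr => j _; rewrite mnmE.
have -> : m = [multinom (\sum_(j < k.+1) cc j i)%N | i < n].
  by apply/mnmP => i; rewrite mnmE Hsum.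
apply: (@Spow_parts k.+1 cc) => j hj; apply: wt_Pk1.
have -> : [multinom cc j i | i < n] = mj (Ordinal hj) by [].
by rewrite wt_mj; exact: (Hy _).2.
Qed.

Lemma Spow_y p m : (0 < p)%N -> Spow (Pk lam 1) p m ->
  exists y : 'I_p -> rat, (forall i, Lambda lam (y i) /\ 1 <= y i) /\
    wt lam m = \sum_(i < p) y i.
Proof.
elim: p m => [|p IH] m // _ [m1 [m2 [h1 [h2 ->]]]].
case: p IH h1 => [|p] IH h1.
  exists (fun _ => wt lam (m1 + m2)%MM); split; last by rewrite big_ord1.
  move=> _; split; first by exists (fun i => (m1 + m2)%MM i).
  apply: Pk1_wt; rewrite addmC; exact: upc_Pk.
have [y' [Hy' Hs']] := IH m1 (ltn0Sn p) h1.
exists (fun i : 'I_p.+2 => if (i < p.+1)%N then y' (inord i) else wt lam m2).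
split.
  move=> i; case: ltnP => _; first exact: Hy'.
  by split; [exists (fun i => m2 i) | exact: Pk1_wt].
rewrite big_ord_recr /= ltnn wtD Hs'; congr (_ + _); apply: eq_bigr => i _.
by rewrite ltn_ord inord_val.
Qed.

End Main.

Unset Implicit Arguments.
Theorem proposition4p7 (K : fieldType) (n : nat) (lam : 'I_n -> nat) :
  (forall i, (0 < lam i)%N) ->
  (forall i j, i != j -> coprime (lam i) (lam j)) ->
  (normal_ideal (@I_lambda K n lam) <-> quasinormal (Lambda lam)).
Proof.
move=> lam_gt0 lam_cop; split.
  move=> Hn x p [c ->] p0 hp.
  pose m := [multinom c i | i < n].
  have wtm : wt lam m = \sum_(i < n) (c i)%:R / (lam i)%:R.
    by apply: eq_bigr => i _; rewrite mnmE.
  have hP : Pk lam p m by rewrite -(wt_ge lam_gt0) wtm.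
  have hint : integral_over_ideal (ideal_pow (@I_lambda K n lam) p) 'X_[m].
    apply: (intX lam_gt0 hP) => y xs hs hG.
    apply: pow_prod_nested hs => z hz; apply: G_I; exact: hG.
  have hX := Hn p p0 _ hint.
  have := MI_pow (@upc_Pk n lam 1%N) (@I_MI K n lam) hX.
  move/MI_X => hS.
  have [y [Hy Hs]] := Spow_y lam_gt0 p0 hS.
  by exists y; split => //; rewrite -wtm.
move=> qn k k0 f hf.
have HQ g : ideal_pow (@I_lambda K n lam) k g -> MI (Pk lam k) g.
  move=> hg; have := MI_pow (@upc_Pk n lam 1%N) (@I_MI K n lam) hg.
  by apply: MI_mono => m hm; have := Spow_Pk hm; rewrite muln1.
have hMI := H1 k0 HQ hf.
rewrite (mpolyE f); apply: pow_sum => m hm; rewrite -mul_mpolyC; apply: powM.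
apply: Spow_X => //; apply: (comb lam_gt0 lam_cop qn); exact: hMI.
Qed.
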